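(* Assume CH. Let $\mathcal{I}$ and $\mathcal{J}$ be ideals such that $\mathcal{I}\subseteq\mathcal{I}'$ for some hereditary weak P-ideal $\mathcal{I}'$ with $\mathcal{J}\not\leq_K\mathcal{I}'$. Then there is a Mr\'owka space in $\mathrm{FinBW}(\mathcal{I})\setminus\mathrm{FinBW}(\mathcal{J})$.
   Context: An ideal on an infinite countable set $X$ is a family $\mathcal{I}\subseteq\mathcal{P}(X)$ closed under subsets and finite unions, containing all finite subsets, with $X\notin\mathcal{I}$. $\mathcal{I}|A=\{B\cap A:B\in\mathcal{I}\}$. A space $X$ is in $\mathrm{FinBW}(\mathcal{I})$ if $X$ is Hausdorff and for every sequence $(x_n)_{n\in\bigcup\mathcal{I}}$ in $X$ there is $A\notin\mathcal{I}$ with $(x_n)_{n\in A}$ convergent in $X$. $\mathcal{J}\leq_K\mathcal{I}$: there is a function $f:\bigcup\mathcal{I}\to\bigcup\mathcal{J}$ with $f^{-1}[B]\in\mathcal{I}$ for all $B\in\mathcal{J}$. $\mathrm{Fin}^2$: ideal on $\omega^2$ of all $A$ with only finitely many $n$ such that $\{m:(n,m)\in A\}$ is infinite. $\mathcal{I}\sqsubseteq\mathcal{J}$: there is a bijection $f:\bigcup\mathcal{J}\to\bigcup\mathcal{I}$ with $f^{-1}[A]\in\mathcal{J}$ for all $A\in\mathcal{I}$. $\mathcal{I}$ is a hereditary weak P-ideal if $\mathrm{Fin}^2\not\sqsubseteq\mathcal{I}|A$ for every $A\notin\mathcal{I}$. A Mr\'owka space is $\Phi(\mathcal{A})$ for an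 infinite almost disjoint family $\mathcal{A}$ of infinite subsets of $\omega$: underlying set $\omega\cup\mathcal{A}\cup\{\infty\}$, points of $\omega$ isolated, basic neighbourhoods of $A\in\mathcal{A}$ are $\{A\}\cup(A\setminus F)$ ($F\subseteq\omega$ finite), of $\infty$ are $\{\infty\}\cup(\mathcal{A}\setminus G)\cup(\omega\setminus(F\cup\bigcup G))$ ($F\subseteq\omega$, $G\subseteq\mathcal{A}$ finite). *)

(* Defs.v *)
From HB Require Import structures.
From mathcomp Require Import all_boot all_order.
From mathcomp Require Import boolp classical_sets functions cardinality topology.

Set Implicit Arguments.
Unset Strict Implicit.
Unset Printing Implicit Defensive.

Local Open Scope classical_set_scope.

Definition CH : Prop :=
  forall S : set (set nat), countable S \/ (S #= [set: set nat])%card.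

(** An ideal is represented by the family [I : set (set T)]; its underlying
    set X is [\bigcup I] (as in the paper, X = \bigcup I). *)
Definition supp {T : Type} (I : set (set T)) : set T := \bigcup_(B in I) B.

Definition is_ideal {T : Type} (I : set (set T)) : Prop :=
  [/\ countable (supp I), infinite_set (supp I),
      (forall A B : set T, I B -> A `<=` B -> I A) /\
      (forall A B : set T, I A -> I B -> I (A `|` B)),
      (forall F : set T, F `<=` supp I -> finite_set F -> I F) &
      ~ I (supp I)].

Definition restr {T : Type} (I : set (set T)) (A : set T) : set (set T) :=
  [set B `&` A | B in I].

Definition katetov_le {T U : Type} (J : set (set U)) (I : set (set T)) : Prop :=
  exists f : T -> U, set_fun (supp I) (supp J) f /\
    forall B : set U, J B -> I (supp I `&` f @^-1` B).

Definition ideal_sqsubseteq {T U : Type} (I : set (set T)) (J : set (set U)) : Prop :=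
  exists f : U -> T, set_bij (supp J) (supp I) f /\
    forall A : set T, I A -> J (supp J `&` f @^-1` A).

Definition Fin2 : set (set (nat * nat)) :=
  [set A | finite_set [set n | infinite_set [set m | A (n, m)]]].

Definition hereditary_weakP {T : Type} (I : set (set T)) : Prop :=
  forall A : set T, A `<=` supp I -> ~ I A -> ~ ideal_sqsubseteq Fin2 (restr I A).

Definition conv_on {T : Type} {X : topologicalType} (x : T -> X) (A : set T) (p : X) : Prop :=
  forall U : set X, nbhs p U -> finite_set [set n | A n /\ ~ U (x n)].

Definition FinBW {T : Type} (I : set (set T)) (X : topologicalType) : Prop :=
  hausdorff_space X /\
  forall x : T -> X, exists A : set T,
    [/\ A `<=` supp I, ~ I A & exists p : X, conv_on x A p].

Definition almost_disjoint_family (AA : set (set nat)) : Prop :=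
  [/\ infinite_set AA,
      (forall A : set nat, AA A -> infinite_set A) &
      (forall A B : set nat, AA A -> AA B -> A <> B -> finite_set (A `&` B))].

(** Underlying set omega ∪ AA ∪ {oo}: [None] is oo, [Some (inl a)] is the
    point a ∈ AA, [Some (inr n)] is n ∈ omega. *)
Definition mrowka (AA : set (set nat)) : Type := option (AA + nat).

HB.instance Definition _ (AA : set (set nat)) := Choice.on (mrowka AA).
HB.instance Definition _ (AA : set (set nat)) :=
  isPointed.Build (mrowka AA) None.

Definition pt_nat {AA : set (set nat)} (n : nat) : mrowka AA := Some (inr n).
Definition pt_set {AA : set (set nat)} (a : AA) : mrowka AA := Some (inl a).

Definition mrowka_basic (AA : set (set nat)) : set (set (mrowka AA)) :=
  [set U | (exists n : nat, U = [set pt_nat n])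
        \/ (exists (a : AA) (F : set nat), finite_set F /\
              U = [set pt_set a] `|` [set pt_nat n | n in (val a `\` F)])
        \/ (exists (F : set nat) (G : set AA), finite_set F /\ finite_set G /\
              U = [set None] `|` [set pt_set a | a in ~` G]
                  `|` [set pt_nat n | n in ~` (F `|` \bigcup_(a in G) val a)])].

Arguments mrowka_basic : clear implicits.

HB.instance Definition _ (AA : set (set nat)) :=
  isSubBaseTopological.Build (mrowka AA) (I := set (mrowka AA)) (mrowka_basic AA) id.

(* Main.v *)
Require Import Defs.
From HB Require Import structures.
From mathcomp Require Import all_boot all_order finmap.
From mathcomp Require Import boolp classical_sets functions cardinality topology wochoice.

Local Open Scope classical_set_scope.
Set Implicit Arguments.
Unset Strict Implicit.
Unset Printing Implicit Defensive.

Lemma nbhs_mrowka AA (p : mrowka AA) (U : set (mrowka AA)) : nbhs p U ->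
  exists DA : {fset set (mrowka AA)}, (forall S, S \in DA -> mrowka_basic AA S /\ S p) /\
   (forall q, (forall S, S \in DA -> S q) -> U q).
Proof.
rewrite nbhsE => -[B [Bop Bp BU]].
move: Bop. rewrite /open /=.
move=> [D' D'sub eqB].
rewrite -eqB in Bp BU.
case: Bp => i D'i ip.
have := D'sub _ D'i => -[DA DAsub eqi].
exists DA; split.
  move=> S SDA; split.
  by have := DAsub S SDA; rewrite /= inE.
  by move: ip; rewrite -eqi; apply.
move=> q Hq; apply: BU; exists i => //.
rewrite -eqi; change ((\bigcap_(S in [set` DA]) S) q).
by move=> S /= SDA; apply: Hq.
Qed.

Lemma open_basic AA (S : set (mrowka AA)) : mrowka_basic AA S -> open S.
Proof.
move=> bS; rewrite /open /=.
exists [set S]; first by move=> _ ->; exact: finI_from1.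
by rewrite bigcup_set1.
Qed.

Lemma nbhs_basic AA (S : set (mrowka AA)) p : mrowka_basic AA S -> S p -> nbhs p S.
Proof. by move=> bS Sp; apply: open_nbhs_nbhs; split=> //; exact: open_basic. Qed.

Lemma conv_basic {T : Type} AA (x : T -> mrowka AA) (A : set T) p :
  (forall S, mrowka_basic AA S -> S p -> finite_set [set n | A n /\ ~ S (x n)]) ->
  conv_on x A p.
Proof.
move=> H U /nbhs_mrowka [DA [HDA HU]].
apply: (sub_finite_set _ (bigcup_finite (D:=[set` DA])
  (F:= fun S => [set n | A n /\ ~ S (x n)]) (finite_fset DA) _)).
  move=> n [An nU]; apply: contrapT => nex; apply: nU; apply: HU => S SDA.
  apply: contrapT => nS; apply: nex; exists S => //.
by move=> S /= SDA; have [bS Sp] := HDA S SDA; exact: H.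
Qed.

Lemma basic_None AA (S : set (mrowka AA)) : mrowka_basic AA S -> S None ->
  exists (F : set nat) (G : set AA), [/\ finite_set F, finite_set G,
    (forall a, ~ G a -> S (pt_set a)) &
    (forall n, ~ F n -> (forall a, G a -> ~ val a n) -> S (pt_nat n))].
Proof.
case=> [[n ->]|[[a [F [_ ->]]]|[F [G [fF [fG ->]]]]]].
- by [].
- by case=> [|[m _]].
exists F, G; split=> //.
  by move=> a Ga; left; right; exists a.
move=> n Fn Gn; right; exists n => //.
move=> [Fn'|[a Ga an]]; [exact: Fn | exact: (Gn a)].
Qed.

Lemma pt_set_inj AA : injective (@pt_set AA).
Proof. by move=> a b [->]. Qed.

Lemma basic_set AA (S : set (mrowka AA)) (a : AA) :
  (forall A B : set nat, AA A -> AA B -> A <> B -> finite_set (A `&` B)) ->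
  mrowka_basic AA S -> S (pt_set a) ->
  exists F : set nat, finite_set F /\ (forall n, val a n -> ~ F n -> S (pt_nat n)).
Proof.
move=> AD.
case=> [[n ->]|[[b [F [fF ->]]]|[F [G [fF [fG ->]]]]]].
- by [].
- case=> [/pt_set_inj ab|[m _]]; last by [].
  subst b; exists F; split=> // n an Fn; right; exists n => //.
- move=> Sa.
  have Ga : ~ G a.
    case: Sa => [[|[b Gb /pt_set_inj ba]]|[m _]] //; by subst b.
  exists (F `|` (val a `&` \bigcup_(b in G) val b)); split.
    rewrite finite_setU; split => //.
    rewrite setI_bigcupr; apply: bigcup_finite => // b Gb.
    apply: AD; [exact: set_mem (valP a) | exact: set_mem (valP b) |].
    by move=> ab; apply: Ga; have -> : a = b by apply: val_inj.
  move=> n an nF; right; exists n => //.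
  by move=> [Fn|Gn]; apply: nF; [left|right].
Qed.

Definition b2 {AA : set (set nat)} (a : AA) (F : set nat) : set (mrowka AA) :=
  [set pt_set a] `|` [set pt_nat n | n in (val a `\` F)].
Definition b3 {AA : set (set nat)} (F : set nat) (G : set AA) : set (mrowka AA) :=
  [set None] `|` [set pt_set a | a in ~` G]
                  `|` [set pt_nat n | n in ~` (F `|` \bigcup_(a in G) val a)].

Lemma b1_basic (AA : set (set nat)) n : mrowka_basic AA [set pt_nat n].
Proof. by left; exists n. Qed.
Lemma b2_basic (AA : set (set nat)) (a : AA) F : finite_set F -> mrowka_basic AA (b2 a F).
Proof. by move=> fF; right; left; exists a, F. Qed.
Lemma b3_basic (AA : set (set nat)) F (G : set AA) : finite_set F -> finite_set G -> mrowka_basic AA (b3 F G).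
Proof. by move=> fF fG; right; right; exists F, G. Qed.

Lemma sep_mrowka {AA : set (set nat)} (p q : mrowka AA) :
  (forall A B : set nat, AA A -> AA B -> A <> B -> finite_set (A `&` B)) ->
  p <> q -> exists S S', [/\ mrowka_basic AA S, S p, mrowka_basic AA S', S' q &
     forall z, S z -> S' z -> False].
Proof.
move=> AD.
have G1 : forall (a : AA), exists S S', [/\ mrowka_basic AA S, S None, mrowka_basic AA S', S' (pt_set a) &
     forall z, S z -> S' z -> False].
  move=> a; exists (b3 set0 [set a]), (b2 a set0); split.
  - by apply: b3_basic => //; exact: finite_set1.
  - by left; left.
  - exact: b2_basic.
  - by left.
  move=> z [[->|[b nb <-]]|[n nn <-]] [|[m [am _]]] //.
  + by move/pt_set_inj => ba; apply: nb; rewrite ba.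
  + by case=> mn; apply: nn; right; exists a => //; rewrite -mn.
have G2 : forall n, exists S S', [/\ mrowka_basic AA S, S None, mrowka_basic AA S', S' (pt_nat n) &
     forall z, S z -> S' z -> False].
  move=> n; exists (b3 [set n] set0), [set pt_nat n]; split.
  - by apply: b3_basic; [exact: finite_set1| exact: finite_set0].
  - by left; left.
  - exact: b1_basic.
  - by [].
  by move=> z [[->|[b nb <-]]|[m nm <-]] // [mn]; apply: nm; left.
have G3 : forall (a : AA) n, exists S S', [/\ mrowka_basic AA S, S (pt_set a), mrowka_basic AA S', S' (pt_nat n) &
     forall z, S z -> S' z -> False].
  move=> a n; exists (b2 a [set n]), [set pt_nat n]; split.
  - by apply: b2_basic; exact: finite_set1.
  - by left.
  - exact: b1_basic.
  - by [].
  by move=> z [->|[m [_ nm] <-]] // [mn]; apply: nm.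
have sym : forall p q, (exists S S', [/\ mrowka_basic AA S, S p, mrowka_basic AA S', S' q &
     forall z, S z -> S' z -> False]) -> (exists S S', [/\ mrowka_basic AA S, S q, mrowka_basic AA S', S' p &
     forall z, S z -> S' z -> False]).
  move=> p' q' [S [S' [? ? ? ? H]]]; exists S', S; split=> // z ? ?; exact: (H z).
case: p => [[a|n]|]; case: q => [[b|m]|] pq.
- have ab : a <> b by move=> ab; apply: pq; rewrite ab.
  exists (b2 a (val a `&` val b)), (b2 b set0); split.
  + apply: b2_basic; apply: AD; [exact: set_mem (valP a)|exact: set_mem (valP b)|].
    by move=> e; apply: ab; apply: val_inj.
  + by left.
  + exact: b2_basic.
  + by left.
  move=> z [->|[k [ak nk] <-]] [|[k' [bk' _]]] //.
  by case=> e; subst k'; apply: nk.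
- exact: G3.
- apply: sym; exact: G1.
- apply: sym; exact: G3.
- have nm : n <> m by move=> e; apply: pq; rewrite e.
  exists [set pt_nat n], [set pt_nat m]; split; try exact: b1_basic; try by [].
  by move=> z -> [].
- apply: sym; exact: G2.
- exact: G1.
- exact: G2.
- by case: pq.
Qed.

Lemma mrowka_hausdorff AA :
  (forall A B : set nat, AA A -> AA B -> A <> B -> finite_set (A `&` B)) ->
  hausdorff_space (mrowka AA).
Proof.
move=> AD p q cl; apply: contrapT => pq.
have [S [S' [bS Sp bS' S'q H]]] := sep_mrowka AD pq.
have [z [Sz S'z]] := cl S S' (nbhs_basic bS Sp) (nbhs_basic bS' S'q).
exact: (H z).
Qed.

Lemma conv_const {T : Type} {X : topologicalType} (x : T -> X) (A : set T) p :
  (forall n, A n -> x n = p) -> conv_on x A p.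
Proof.
move=> H U Up; have Upp := nbhs_singleton Up.
apply: (sub_finite_set _ (finite_set0 T)) => n [An nU]; apply: nU.
by rewrite H.
Qed.

Lemma conv_None {T : Type} AA (x : T -> mrowka AA) (A : set T) :
  (forall n, A n -> exists a, x n = pt_set a) ->
  (forall a, finite_set [set n | A n /\ x n = pt_set a]) -> conv_on x A None.
Proof.
move=> Hx Hf; apply: conv_basic => S bS SN.
have [F [G [fF fG HG HF]]] := basic_None bS SN.
apply: (sub_finite_set _ (bigcup_finite (F := fun a => [set n | A n /\ x n = pt_set a]) fG _)).
  move=> n [An nS]; have [a xa] := Hx n An.
  exists a; last by split.
  apply: contrapT => Ga; apply: nS; rewrite xa; exact: HG.
by move=> a _; exact: Hf.
Qed.

Lemma conv_set {T : Type} AA (x : T -> mrowka AA) (A : set T) (a : AA) :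
  (forall A B : set nat, AA A -> AA B -> A <> B -> finite_set (A `&` B)) ->
  (forall n, A n -> exists m, x n = pt_nat m /\ val a m) ->
  (forall m, finite_set [set n | A n /\ x n = pt_nat m]) -> conv_on x A (pt_set a).
Proof.
move=> AD Hx Hf; apply: conv_basic => S bS Sa.
have [F [fF HF]] := basic_set AD bS Sa.
apply: (sub_finite_set _ (bigcup_finite (F := fun m => [set n | A n /\ x n = pt_nat m]) fF _)).
  move=> n [An nS]; have [m [xm am]] := Hx n An.
  exists m; last by split.
  apply: contrapT => Fm; apply: nS; rewrite xm; exact: HF.
by move=> m _; exact: Hf.
Qed.

Section WO.
Variables (T : eqType) (R : rel T).
Hypothesis wo : well_order R.

Lemma wo_min (S : set T) : (exists x, S x) -> exists z, S z /\ forall x, S x -> R z x.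
Proof.
move=> [x Sx].
have ne : nonempty [pred y | `[< S y >]] by exists x; exact/asboolP.
have [z [[zin lb] _]] := wo ne.
exists z; split; first exact/asboolP.
by move=> y Sy; apply: lb; exact/asboolP.
Qed.

Lemma wo_refl x : R x x.
Proof. by have [z [-> H]] := @wo_min [set x] (ex_intro _ x erefl); apply: H. Qed.

Lemma wo_total x y : R x y \/ R y x.
Proof.
have [z [zxy H]] : exists z, (z = x \/ z = y) /\ forall w, (w = x \/ w = y) -> R z w.
  by apply: (@wo_min [set w | w = x \/ w = y]); exists x; left.
case: zxy => e; rewrite e in H; [left|right]; apply: H; by [right|left].
Qed.

Lemma wo_antisym x y : R x y -> R y x -> x = y.
Proof.
move=> Rxy Ryx.
have ne : nonempty [pred w | (w == x) || (w == y)] by exists x; rewrite inE eqxx.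
have [z [_ uniq]] := wo ne.
have zx : z = x.
  by apply: uniq; split; [rewrite inE eqxx | move=> w; rewrite inE => /orP[/eqP->|/eqP->] //; exact: wo_refl].
have zy : z = y.
  by apply: uniq; split; [rewrite inE eqxx orbT | move=> w; rewrite inE => /orP[/eqP->|/eqP->] //; exact: wo_refl].
by rewrite -zx -zy.
Qed.

Lemma wo_trans x y z : R x y -> R y z -> R x z.
Proof.
move=> Rxy Ryz.
have [m [mxyz H]] : exists m, (m = x \/ m = y \/ m = z) /\ forall w, (w = x \/ w = y \/ w = z) -> R m w.
  by apply: (@wo_min [set w | w = x \/ w = y \/ w = z]); exists x; left.
case: mxyz => [e|[e|e]]; rewrite e in H.
- by apply: H; right; right.
- have xy : x = y by apply: wo_antisym => //; apply: H; left.
  by rewrite xy.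
- have yz : y = z by apply: wo_antisym => //; apply: H; right; left.
  by rewrite -yz.
Qed.

Definition wlt x y := R x y /\ x <> y.

Lemma wlt_wf : well_founded wlt.
Proof.
move=> x; apply: contrapT => nAx.
have [z [nAz H]] := @wo_min [set y | ~ Acc wlt y] (ex_intro _ x nAx).
apply: nAz; constructor => y [Ryz yz]; apply: contrapT => nAy.
by apply: yz; apply: wo_antisym => //; apply: H.
Qed.

Lemma wlt_trans x y z : wlt x y -> wlt y z -> wlt x z.
Proof.
move=> [Rxy xy] [Ryz yz]; split; first exact: wo_trans Rxy Ryz.
move=> xz; subst z; apply: xy; exact: wo_antisym.
Qed.

Lemma wlt_total x y : x <> y -> wlt x y \/ wlt y x.
Proof. by move=> xy; case: (wo_total x y) => ?; [left|right]; split=> // /esym. Qed.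

Lemma wlt_irr x : ~ wlt x x.
Proof. by case. Qed.

End WO.

Lemma ideal_bigcup {I : choiceType} {T : Type} (J : set (set T))
  (JU : forall A B, J A -> J B -> J (A `|` B)) (J0 : J set0)
  (D : set I) (F : I -> set T) :
  finite_set D -> (forall i, D i -> J (F i)) -> J (\bigcup_(i in D) F i).
Proof.
move=> /finite_fsetP [X ->]; elim/fset1U_rect: X.
  by move=> _; rewrite set_fset0 bigcup_set0.
move=> x X _ IH H; rewrite set_fsetU1 bigcup_setU1; apply: JU.
  by apply: H; rewrite set_fsetU1; left.
by apply: IH => i Xi; apply: H; rewrite set_fsetU1; right.
Qed.

Lemma least_ex (P : nat -> Prop) : (exists k, P k) ->
  exists k, P k /\ forall j, (j < k)%N -> ~ P j.
Proof.
move=> [k Pk].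
have H : exists n, `[< P n >] by exists k; exact/asboolP.
case: (ex_minnP H) => m /asboolP Pm minm; exists m; split=> // j jm Pj.
have := minm j (asboolT Pj); by rewrite leqNgt jm.
Qed.

Lemma countable_enum (F : set (set nat)) : countable F ->
  exists e : nat -> set nat, (forall a, F a -> exists k, e k = a) /\
    (forall k, F (e k) \/ e k = set0).
Proof.
move=> /countable_injP [f finj].
exists (fun k => xget set0 [set a | F a /\ f a = k]); split.
  move=> a Fa; exists (f a).
  case: xgetP => [b _ [Fb fb]|]; last by move=> /(_ a); case.
  by apply: finj; rewrite ?inE.
move=> k; case: xgetP => [b _ [Fb _]|_]; by [left|right].
Qed.

Section Core.
Variables (I0 J0 : set (set nat)).
Hypothesis I0sub : forall A B, I0 B -> A `<=` B -> I0 A.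
Hypothesis I0U : forall A B, I0 A -> I0 B -> I0 (A `|` B).
Hypothesis I0fin : forall F, finite_set F -> I0 F.
Hypothesis J0sub : forall A B, J0 B -> A `<=` B -> J0 A.
Hypothesis J0U : forall A B, J0 A -> J0 B -> J0 (A `|` B).
Hypothesis J0fin : forall F, finite_set F -> J0 F.
Hypothesis J0T : ~ J0 setT.
Hypothesis WP : forall (C : set nat) (pi : nat -> nat), ~ I0 C ->
  (forall k, I0 (C `&` pi @^-1` [set k])) ->
  exists D, [/\ D `<=` C, ~ I0 D & forall k, finite_set (D `&` pi @^-1` [set k])].
Hypothesis KT : forall g : nat -> nat, exists b, J0 b /\ ~ I0 (g @^-1` b).

Lemma I0s A B : I0 B -> A `<=` B -> I0 A. Proof. exact: I0sub. Qed.
Lemma J0s A B : J0 B -> A `<=` B -> J0 A. Proof. exact: J0sub. Qed.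

Definition Task := (set nat + (nat -> nat))%type.

Definition Sat (t : Task) (F : set (set nat)) : Prop :=
  match t with
  | inl E => J0 E \/ exists a, F a /\ infinite_set (E `&` a)
  | inr g => (exists k, ~ I0 (g @^-1` [set k])) \/
      exists a, F a /\ exists D, [/\ ~ I0 D, g @` D `<=` a &
        forall k, finite_set (D `&` g @^-1` [set k])]
  end.

Definition Good (F : set (set nat)) (t : Task) (p : set nat) :=
  [/\ J0 p, (forall a, F a -> finite_set (p `&` a)) & Sat t (F `|` [set p])].

Lemma tall E : ~ J0 E -> exists b, [/\ b `<=` E, J0 b & infinite_set b].
Proof.
move=> nJE.
have infE : infinite_set E by move=> fE; apply: nJE; exact: J0fin.
have /infiniteP/pcard_leP/injfunPex [g gfun ginj] := infE.
have [b0 [Jb0 nIb0]] := KT g.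
exists (b0 `&` E); split => //; first exact: J0s Jb0 _.
move=> fb; apply: nIb0; apply: I0fin.
have : finite_set (g @^-1` (b0 `&` E)).
  apply: finite_preimage fb => x y _ _ /ginj; apply; by rewrite inE.
apply: sub_finite_set => n b0n; split => //; exact: gfun.
Qed.

Lemma J0set0 : J0 set0. Proof. exact/J0fin/finite_set0. Qed.
Lemma I0set0 : I0 set0. Proof. exact/I0fin/finite_set0. Qed.

Lemma good_ex (F : set (set nat)) (t : Task) : countable F -> exists p, Good F t p.
Proof.
move=> cF; case: t => [E|g].
- have [H|H] := pselect (J0 E \/ exists a, F a /\ infinite_set (E `&` a)).
    exists set0; split; first exact: J0set0.
      by move=> a _; rewrite set0I; exact: finite_set0.
    case: H => [JE|[a [Fa ia]]]; [by left|right; exists a; split=> //; by left].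
  have nJE : ~ J0 E by move=> JE; apply: H; left.
  have fin : forall a, F a -> finite_set (E `&` a).
    by move=> a Fa; apply: contrapT => ia; apply: H; right; exists a.
  have [b [bE Jb ib]] := tall nJE.
  exists b; split => //.
    move=> a Fa; apply: sub_finite_set (fin a Fa) => n [bn an]; split => //; exact: bE.
  right; exists b; split; first by right.
  by rewrite setIidr.
have [H|H] := pselect (exists k, ~ I0 (g @^-1` [set k])).
  exists set0; split; [exact: J0set0| |by left].
  by move=> a _; rewrite set0I; exact: finite_set0.
have fibI : forall k, I0 (g @^-1` [set k]).
  by move=> k; apply: contrapT => nI; apply: H; exists k.
have [b [Jb nIQ]] := KT g.
have [Q1 [Q1Q nIQ1 finQ1]] := WP nIQ (fun k => I0s (fibI k) (@subIsetr _ _ _)).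
have [H2|H2] := pselect (exists a, F a /\ ~ I0 (Q1 `&` g @^-1` a)).
  case: H2 => a [Fa nIa].
  exists set0; split; [exact: J0set0| |].
    by move=> a' _; rewrite set0I; exact: finite_set0.
  right; exists a; split; first by left.
  exists (Q1 `&` g @^-1` a); split => //.
    by move=> _ [n [_ an] <-].
  move=> k; apply: sub_finite_set (finQ1 k) => n [[Qn _] gn]; by split.
have IFa : forall a, F a -> I0 (Q1 `&` g @^-1` a).
  by move=> a Fa; apply: contrapT => nI; apply: H2; exists a.
have [e [esurj eF]] := countable_enum cF.
have Ie : forall k, I0 (Q1 `&` g @^-1` (e k)).
  move=> k; case: (eF k) => [Fe|->]; first exact: IFa.
  by rewrite preimage_set0 setI0; exact: I0set0.
have [D [DQ1 nID finD]] : exists D, [/\ D `<=` Q1, ~ I0 D &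
    forall k, finite_set (D `&` g @^-1` (e k))].
  pose R := Q1 `&` [set n | forall k, ~ e k (g n)].
  have [nIR|IR] := pselect (~ I0 R).
    exists R; split => //; first exact: subIsetl.
    move=> k; apply: sub_finite_set (finite_set0 nat) => n [[_ Rn] en].
    exact: (Rn k).
  have {}IR : I0 R by apply: contrapT.
  pose kap n := if `[< exists k, e k (g n) >] then
      (xget 0%N [set j | e j (g n) /\ forall i, (i < j)%N -> ~ e i (g n)]).+1 else 0%N.
  have kapP : forall n k, e k (g n) -> exists j, kap n = j.+1 /\ e j (g n) /\ (j <= k)%N.
    move=> n k ek; rewrite /kap; have ex : exists k, e k (g n) by exists k.
    rewrite asboolT //.
    case: xgetP => [j _ [ej minj]|nx]; last first.
      by have [j [ej minj]] := least_ex ex; exfalso; apply: (nx j).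
    exists j; split => //; split => //.
    by rewrite leqNgt; apply/negP => kj; apply: (minj k).
  have kap0 : forall n, kap n = 0%N -> forall k, ~ e k (g n).
    by move=> n k0 k ek; have [j [kj _]] := kapP n k ek; rewrite k0 in kj.
  have kapS : forall n j, kap n = j.+1 -> e j (g n).
    move=> n j; rewrite /kap; case: asboolP => ex; last by [].
    case: xgetP => [j' _ [ej' _]|nx] [<-] //.
    by have [j0 [ej minj]] := least_ex ex; exfalso; apply: (nx j0).
  have fibk : forall k, I0 (Q1 `&` kap @^-1` [set k]).
    move=> [|j].
      by apply: (I0s IR) => n [Q1n k0]; rewrite /R; split => //; exact: kap0.
    by apply: (I0s (Ie j)) => n [Q1n kj]; split => //; exact: kapS.
  have [D [DQ1 nID finD]] := WP nIQ1 fibk.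
  exists D; split => // k.
  apply: sub_finite_set (bigcup_finite (D := `I_k.+1)
    (F := fun j => D `&` kap @^-1` [set j.+1]) (finite_II _) (fun j _ => finD j.+1)).
  move=> n [Dn ekn]; have [j [kj [ej jk]]] := kapP n k ekn.
  by exists j => //=; rewrite ltnS.
exists (b `&` g @` D); split.
- exact: J0s Jb (@subIsetl _ _ _).
- move=> a Fa; have [k ek] := esurj a Fa; subst a.
  apply: sub_finite_set (finite_image g (finD k)).
  by move=> _ [[_ [n Dn <-]] ek]; exists n.
right; exists (b `&` g @` D); split; first by right.
exists D; split => //.
  by move=> _ [n Dn <-]; split; [exact: Q1Q (DQ1 _ Dn)|exists n].
move=> k; apply: sub_finite_set (finQ1 k) => n [Dn gn]; split => //; exact: DQ1.
Qed.


Definition gcode (g : nat -> nat) : set nat :=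
  [set n | exists k, n = @choice.pickle (nat * nat)%type (k, g k)].

Lemma gcode_inj g h : gcode g = gcode h -> g = h.
Proof.
move=> e; apply: funext => k.
have : gcode h (choice.pickle (k, g k)) by rewrite -e; exists k.
move=> [k' /(pcan_inj (@choice.pickleK_inv _))] [kk ->]; by rewrite kk.
Qed.

Definition dec (S : set nat) : Task :=
  if pselect (S 0%N) is left _ then inl [set n | S n.+1]
  else if pselect (exists g, gcode g = [set n | S n.+1]) is left H then inr (projT1 (cid H))
  else inr id.

Lemma dec_surj t : exists S, dec S = t.
Proof.
case: t => [E|g].
  exists [set n | match n with 0%N => True | m.+1 => E m end].
  by rewrite /dec; case: pselect => // -[].
exists [set n | match n with 0%N => False | m.+1 => gcode g m end].
rewrite /dec; case: pselect => // _; case: pselect => [H|]; last first.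
  by case; exists g.
congr inr; case: (cid H) => h /= hg; exact: gcode_inj.
Qed.

Definition CHx : Prop :=
  forall S : set (set nat), countable S \/ (S #= [set: set nat])%card.

Theorem core_construct : CHx -> exists AA : set (set nat),
  [/\ (forall a, AA a -> J0 a /\ infinite_set a),
      (forall a b, AA a -> AA b -> a <> b -> finite_set (a `&` b)),
      (forall E, ~ J0 E -> exists a, AA a /\ infinite_set (E `&` a)) &
      (forall g : nat -> nat, (forall k, I0 (g @^-1` [set k])) ->
         exists a, AA a /\ exists D, [/\ ~ I0 D, g @` D `<=` a &
            forall k, finite_set (D `&` g @^-1` [set k])])].
Proof.
move=> ch.
have [R wo] := well_ordering_principle (set nat).
pose lt := wlt R.
have wf : well_founded lt := wlt_wf wo.
pose Dom := [set t | countable [set u | lt u t]].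
have Domdown : forall u t, lt u t -> Dom t -> Dom u.
  move=> u t ut Dt; apply: sub_countable Dt; apply: subset_card_le => v vu.
  exact: (wlt_trans wo vu ut).
have [sig sigS] : exists sig : set nat -> set nat, forall S, exists t, Dom t /\ sig t = S.
  have [allD|] := pselect (forall t, Dom t).
    by exists id => S; exists S; split.
  move=> /existsNP ex.
  have [s0 [ns0 mins0]] := wo_min wo ex.
  have PD : [set u | lt u s0] `<=` Dom.
    move=> u [Rus us]; apply: contrapT => nDu.
    by apply: us; apply: (wo_antisym wo) => //; apply: mins0.
  case: (ch [set u | lt u s0]) => [//|].
  move=> /card_set_bijP [f [_ _ fsurj]].
  exists f => S; have [t Pt ft] := fsurj S I.
  by exists t; split => //; apply: PD.
pose tk t := dec (sig t).
have tkS : forall t0, exists t, Dom t /\ tk t = t0.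
  move=> t0; have [S dS] := dec_surj t0; have [t [Dt st]] := sigS S.
  by exists t; split => //; rewrite /tk st.
pose Fb (t : set nat) (rec : forall u, lt u t -> set nat) : set nat :=
  xget set0 (Good [set a | exists u (h : lt u t), a = rec u h] (tk t)).
pose p := Fix wf (fun _ => set nat) Fb.
have peq : forall t, p t = xget set0 (Good (p @` [set u | lt u t]) (tk t)).
  move=> t; rewrite /p Fix_eq.
    rewrite /Fb; congr (xget set0 (Good _ (tk t))).
    apply/seteqP; split => [a [u [h ->]]|_ [u h <-]]; first by exists u.
    by exists u, h.
  move=> x f g fg; rewrite /Fb.
  have -> : f = g; last by [].
  apply: functional_extensionality_dep => y.
  apply: functional_extensionality_dep => h; exact: fg.
have pgood : forall t, Dom t -> Good (p @` [set u | lt u t]) (tk t) (p t).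
  move=> t Dt; rewrite peq; apply: xgetPex; apply: good_ex.
  exact: card_le_trans (card_image_le _ _) Dt.
pose AA := [set a | exists t, [/\ Dom t, a = p t & infinite_set a]].
have SatAA : forall t, Dom t -> forall a, (p @` [set u | lt u t] `|` [set p t]) a ->
    infinite_set a -> AA a.
  move=> t Dt a [[u ut <-]|->] ia.
    by exists u; split => //; exact: Domdown ut Dt.
  by exists t.
exists AA; split.
- move=> a [t [Dt -> ia]]; split => //; by case: (pgood t Dt).
- move=> a b [t [Dt -> _]] [t' [Dt' -> _]] ab.
  have tt' : t <> t' by move=> e; apply: ab; rewrite e.
  case: (wlt_total wo tt') => [ltt|ltt].
    have [_ H _] := pgood t' Dt'; rewrite setIC; apply: H; by exists t.
  have [_ H _] := pgood t Dt; apply: H; by exists t'.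
- move=> E nJE; have [t [Dt tkt]] := tkS (inl E).
  have [_ _] := pgood t Dt; rewrite tkt /= => -[//|[a [Fa ia]]].
  exists a; split => //; apply: SatAA Fa _ => //.
  by move=> fa; apply: ia; apply: finite_setIr.
- move=> g fib; have [t [Dt tkt]] := tkS (inr g).
  have [_ _] := pgood t Dt; rewrite tkt /= => -[[k nI]|[a [Fa [D [nID gD finD]]]]].
    by exfalso; apply: nI.
  exists a; split; last by exists D.
  apply: SatAA Fa _ => // fa; apply: nID; apply: I0fin.
  apply: sub_finite_set (bigcup_finite (F := fun k => D `&` g @^-1` [set k]) fa (fun k _ => finD k)).
  by move=> n Dn; exists (g n); [apply: gD; exists n|].
Qed.

End Core.

Lemma nat_bij_setT (A : set nat) : infinite_set A -> exists f : nat -> nat, set_bij A setT f.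
Proof.
move=> iA; have : (A #= [set: nat])%card by apply: eq_card_nat.
by move/card_set_bijP.
Qed.

Lemma col_bij (C : set nat) (phi : nat -> nat) :
  infinite_set (phi @` C) ->
  (forall j, (phi @` C) j -> infinite_set (C `&` phi @^-1` [set j])) ->
  exists (f0 : nat -> nat * nat) (idx : nat -> nat),
    [/\ set_bij C setT f0, (forall n, C n -> (f0 n).1 = idx (phi n)) &
        {in phi @` C &, injective idx}].
Proof.
move=> iK ifib.
have [idx [_ idxinj idxsurj]] := nat_bij_setT iK.
have H : forall j, exists b : nat -> nat,
  (phi @` C) j -> set_bij (C `&` phi @^-1` [set j]) setT b.
  move=> j; have [Kj|nKj] := pselect ((phi @` C) j).
    by have [b bb] := nat_bij_setT (ifib j Kj); exists b.
  by exists id.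
have [be beP] := choice H.
exists (fun n => (idx (phi n), be (phi n) n)), idx; split => //.
split.
- by move=> *.
- move=> n m /set_mem Cn /set_mem Cm [e1 e2].
  have Kn : (phi @` C) (phi n) by exists n.
  have Km : (phi @` C) (phi m) by exists m.
  have pe : phi n = phi m by apply: idxinj; rewrite ?inE.
  have [_ binj _] := beP _ Kn.
  apply: binj; rewrite ?inE.
  + by split.
  + by split => //; rewrite /= -pe.
  + by rewrite e2 pe.
- move=> [k l] _.
  have [j Kj <-] := idxsurj k I.
  have [_ _ bsurj] := beP _ Kj.
  have [n [Cn pn] <-] := bsurj l I.
  exists n => //; rewrite pn; done.
Qed.

Section WPnat.
Variable I0 : set (set nat).
Hypothesis I0sub : forall A B, I0 B -> A `<=` B -> I0 A.
Hypothesis I0U : forall A B, I0 A -> I0 B -> I0 (A `|` B).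
Hypothesis I0fin : forall F, finite_set F -> I0 F.
Variable Fin2 : set (set (nat * nat)).
Hypothesis Fin2E : forall B, Fin2 B -> finite_set [set n | infinite_set [set m | B (n, m)]].
Hypothesis NoF2 : forall C0, ~ I0 C0 -> ~ (exists f0 : nat -> nat * nat,
  set_bij C0 setT f0 /\ forall B, Fin2 B -> I0 (C0 `&` f0 @^-1` B)).

Let I0s A B : I0 B -> A `<=` B -> I0 A. Proof. exact: I0sub. Qed.
Let I0z : I0 set0. Proof. exact/I0fin/finite_set0. Qed.

Lemma WP_nat (C : set nat) (pi : nat -> nat) : ~ I0 C ->
  (forall k, I0 (C `&` pi @^-1` [set k])) ->
  exists D, [/\ D `<=` C, ~ I0 D & forall k, finite_set (D `&` pi @^-1` [set k])].
Proof.
move=> nIC fib; apply: contrapT => nD.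
have Hsmall : forall D, D `<=` C -> (forall k, finite_set (D `&` pi @^-1` [set k])) -> I0 D.
  by move=> D DC fD; apply: contrapT => nID; apply: nD; exists D.
pose K := [set k | infinite_set (C `&` pi @^-1` [set k])].
have iK : infinite_set K.
  move=> fK; apply: nIC.
  have fr : forall k, finite_set ((C `&` [set n | ~ K (pi n)]) `&` pi @^-1` [set k]).
    move=> k; have [Kk|nKk] := pselect (K k).
      apply: sub_finite_set (finite_set0 nat) => n [[_ nK] pk].
      by apply: nK; rewrite pk.
    have fk : finite_set (C `&` pi @^-1` [set k]) by apply: contrapT.
    by apply: sub_finite_set fk => n [[Cn _] pk].
  apply: (I0s (I0U (ideal_bigcup I0U I0z fK (fun k _ => fib k))
     (Hsmall (C `&` [set n | ~ K (pi n)]) (@subIsetl _ _ _) fr))).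
  move=> n Cn; have [Kp|nKp] := pselect (K (pi n)).
    by left; exists (pi n).
  by right.
have unb : forall k, exists j, K j /\ (k <= j)%N.
  move=> k; apply: contrapT => nex; apply: iK.
  apply: sub_finite_set (finite_II k) => j Kj /=.
  by rewrite ltnNge; apply/negP => kj; apply: nex; exists j.
pose nxt k := xget 0%N [set j | (K j /\ (k <= j)%N) /\ forall i, (i < j)%N -> ~ (K i /\ (k <= i)%N)].
have nxtP : forall k, [/\ K (nxt k), (k <= nxt k)%N & forall i, (i < nxt k)%N -> ~ (K i /\ (k <= i)%N)].
  move=> k; have := xgetPex 0%N (least_ex (unb k)).
  by rewrite -/(nxt k) => -[[? ?] ?]; split.
have nxtK : forall j, K j -> nxt j = j.
  move=> j Kj; have [_ jn mn] := nxtP j.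
  apply/eqP; rewrite eqn_leq jn andbT leqNgt; apply/negP => jlt.
  by apply: (mn j jlt).
pose phi n := nxt (pi n).
have KphiC : K `<=` phi @` C.
  move=> j Kj; have /infinite_setN0 [n [Cn pn]] := Kj.
  by exists n => //; rewrite /phi pn nxtK.
have fibphi : forall j, (phi @` C) j -> infinite_set (C `&` phi @^-1` [set j]).
  move=> j [n0 Cn0 <-]; have [Kj _ _] := nxtP (pi n0).
  apply: (sub_infinite_set _ Kj) => n [Cn pn]; split => //.
  change (nxt (pi n) = nxt (pi n0)); have pn' : pi n = nxt (pi n0) := pn; rewrite pn'. exact: (nxtK _ Kj).
have Iphi : forall j, I0 (C `&` phi @^-1` [set j]).
  move=> j; apply: (I0s (ideal_bigcup I0U I0z (finite_II j.+1)
    (fun k _ => fib k))).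
  move=> n [Cn pn]; exists (pi n) => //=.
  have [_ le _] := nxtP (pi n); rewrite ltnS; by rewrite /phi /= in pn; rewrite -pn.
have [f0 [idx [fbij f0idx idxinj]]] := col_bij (sub_infinite_set KphiC iK) fibphi.
have [_ f0inj _] := fbij.
apply: (NoF2 nIC); exists f0; split => // B F2B.
pose KB := [set k | infinite_set [set l | B (k, l)]].
have fKB : finite_set KB := Fin2E F2B.
have h2 : forall k, KB k -> I0 (C `&` [set n | (f0 n).1 = k]).
  move=> k _; have [[n0 [Cn0 e0]]|none] := pselect (exists n0, C n0 /\ (f0 n0).1 = k).
    apply: (I0s (Iphi (phi n0))) => n [Cn en]; split => //=.
    apply: idxinj; rewrite ?inE; [by exists n|by exists n0|].
    by rewrite -f0idx // -f0idx // en e0.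
  by apply: (I0s I0z) => n [Cn en]; apply: none; exists n.
have h3 : forall k, finite_set ((C `&` [set n | B (f0 n) /\ ~ KB (f0 n).1]) `&` pi @^-1` [set k]).
  move=> k; pose S := (C `&` [set n | B (f0 n) /\ ~ KB (f0 n).1]) `&` pi @^-1` [set k].
  have [[n0 Sn0]|none] := pselect (exists n0, S n0); last first.
    by apply: sub_finite_set (finite_set0 nat) => n Sn; apply: none; exists n.
  pose c := (f0 n0).1.
  have col : forall n, S n -> (f0 n).1 = c.
    move=> n [[Cn _] pn]; case: Sn0 => [[Cn0 _] pn0].
    by rewrite /c !f0idx // /phi pn pn0.
  have fcol : finite_set [set l | B (c, l)].
    by case: Sn0 => [[_ [_ nKB]] _]; apply: contrapT; rewrite -/c in nKB.
  have fim : finite_set (f0 @` S).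
    apply: sub_finite_set (finite_setX (finite_set1 c) fcol).
    move=> _ [n Sn <-]; split; first exact: col.
    have [[_ [Bn _]] _] := Sn; by rewrite /= -(col n Sn); case: (f0 n) Bn.
  rewrite -(eq_finite_set (inj_card_eq (f := f0) _)) //.
  by move=> n m /set_mem [[Cn _] _] /set_mem [[Cm _] _]; apply: f0inj; rewrite inE.
apply: (I0s (I0U (ideal_bigcup I0U I0z fKB h2)
   (Hsmall (C `&` [set n | B (f0 n) /\ ~ KB (f0 n).1]) (@subIsetl _ _ _) h3))).
move=> n [Cn Bn]; have [KBn|nKBn] := pselect (KB (f0 n).1).
    by left; exists (f0 n).1.
  by right.
Qed.

End WPnat.

Lemma enum_of {T : Type} (A : set T) : countable A -> infinite_set A ->
  exists (h : nat -> T) (fi : T -> nat),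
    [/\ forall n, A (h n), forall n, fi (h n) = n & forall t, A t -> h (fi t) = t].
Proof.
move=> cA iA; have : (A #= [set: nat])%card by apply: eq_card_nat.
move=> /card_set_bijP [fi [_ fiinj fisurj]].
have H : forall n, exists t, A t /\ fi t = n.
  by move=> n; have [t At <-] := fisurj n I; exists t.
have [h hP] := choice H.
exists h, fi; split.
- by move=> n; case: (hP n).
- by move=> n; case: (hP n).
move=> t At; apply: fiinj; rewrite ?inE //; first by case: (hP (fi t)).
by case: (hP (fi t)).
Qed.

Section Transport.
Variables (T : Type) (K : set (set T)) (A : set T) (h : nat -> T) (fi : T -> nat).
Hypothesis Ksub : forall A B, K B -> A `<=` B -> K A.
Hypothesis KU : forall A B, K A -> K B -> K (A `|` B).
Hypothesis Kfin : forall F, F `<=` A -> finite_set F -> K F.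
Hypothesis nKA : ~ K A.
Hypothesis hA : forall n, A (h n).
Hypothesis fih : forall n, fi (h n) = n.
Hypothesis hfi : forall t, A t -> h (fi t) = t.

Definition K0 := [set S : set nat | K (h @` S)].

Lemma K0sub S S' : K0 S' -> S `<=` S' -> K0 S.
Proof. by move=> KS' SS'; apply: Ksub KS' _; apply: image_subset. Qed.

Lemma K0U S S' : K0 S -> K0 S' -> K0 (S `|` S').
Proof. by rewrite /K0 /= image_setU; apply: KU. Qed.

Lemma K0fin S : finite_set S -> K0 S.
Proof. by move=> fS; apply: Kfin; [move=> _ [n _ <-]|exact: finite_image]. Qed.

Lemma h_setT : h @` setT = A.
Proof.
apply/seteqP; split => [_ [n _ <-] //|t At].
by exists (fi t) => //; rewrite hfi.
Qed.

Lemma K0T : ~ K0 setT.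
Proof. by rewrite /K0 /= h_setT. Qed.

Lemma h_pre (S : set T) : S `<=` A -> h @` (h @^-1` S) = S.
Proof.
move=> SA; apply/seteqP; split => [_ [n Sn <-] //|t St].
by exists (fi t); rewrite /= hfi //; apply: SA.
Qed.

End Transport.

Unset Implicit Arguments.

Theorem theorem9p3 :
  CH ->
  forall (T U : Type) (I I' : set (set T)) (J : set (set U)),
    is_ideal I -> is_ideal I' -> is_ideal J ->
    supp I = supp I' -> I `<=` I' -> hereditary_weakP I' -> ~ katetov_le J I' ->
    exists AA : set (set nat),
      almost_disjoint_family AA /\
      FinBW I (mrowka AA) /\ ~ FinBW J (mrowka AA).
Proof.
move=> ch T U I I' J _ [cX iX [I'sub I'U] I'fin nI'X] [cY iY [Jsub JU] Jfin nJY]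
  sIe II' hwp nkat.
have [hI [fI [hIX fIh hfI]]] := enum_of cX iX.
have [hJ [fJ [hJY fJh hfJ]]] := enum_of cY iY.
pose I0 := K0 I' hI.
pose J0 := K0 J hJ.
have I0sub : forall A B, I0 B -> A `<=` B -> I0 A := K0sub I'sub.
have I0U : forall A B, I0 A -> I0 B -> I0 (A `|` B) := K0U I'U.
have I0fin : forall F, finite_set F -> I0 F := K0fin I'fin hIX.
have J0sub : forall A B, J0 B -> A `<=` B -> J0 A := K0sub Jsub.
have J0U : forall A B, J0 A -> J0 B -> J0 (A `|` B) := K0U JU.
have J0fin : forall F, finite_set F -> J0 F := K0fin Jfin hJY.
have J0T : ~ J0 setT := K0T nJY hJY hfJ.
have KT : forall g : nat -> nat, exists b, J0 b /\ ~ I0 (g @^-1` b).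
  move=> g; apply: contrapT => nex; apply: nkat.
  exists (fun t => hJ (g (fI t))); split; first by move=> t _; apply: hJY.
  move=> B JB; apply: contrapT => nI; apply: nex; exists (hJ @^-1` B); split.
    by apply: Jsub JB _; exact: image_preimage_subset.
  move=> I0g; apply: nI; apply: I'sub I0g _ => t [Xt Bt].
  by exists (fI t) => //; exact: hfI.
have suppF : supp Fin2 = setT.
  apply/seteqP; split => // -[n m] _; exists [set (n, m)] => //.
  apply: sub_finite_set (finite_set0 nat) => n' inf; apply: inf.
  apply: sub_finite_set (finite_set1 m) => m' /= [_ ->] //.
have NoF2 : forall C0, ~ I0 C0 -> ~ (exists f0 : nat -> nat * nat,
    set_bij C0 setT f0 /\ forall B, Fin2 B -> I0 (C0 `&` f0 @^-1` B)).
  move=> C0 nIC0 [f0 [[_ f0inj f0surj] f0pre]].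
  pose A := hI @` C0.
  have AX : A `<=` supp I' by move=> _ [n _ <-]; exact: hIX.
  have suppR : supp (restr I' A) = A.
    apply/seteqP; split; first by move=> t [_ [B _ <-] [_ At]].
    move=> t At; exists ([set t] `&` A) => //.
    exists [set t] => //; apply: I'fin; last exact: finite_set1.
    by move=> _ ->; exact: AX.
  apply: (hwp A AX nIC0); exists (fun t => f0 (fI t)); split.
    rewrite suppR suppF; split.
    - by move=> *.
    - move=> t t' /set_mem [c Cc <-] /set_mem [c' Cc' <-]; rewrite !fIh => e.
      by congr hI; apply: f0inj; rewrite ?inE.
    - move=> k _; have [c Cc <-] := f0surj k Logic.I.
      by exists (hI c); [exists c|rewrite fIh].
  move=> B F2B; rewrite suppR.
  exists (hI @` (C0 `&` f0 @^-1` B)); first exact: f0pre.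
  apply/seteqP; split.
    move=> _ [[c [Cc Bc] <-] _]; split; first by exists c.
    by rewrite /= fIh.
  move=> _ [[c Cc <-] Bt]; split; last by exists c.
  by exists c => //; split => //; rewrite /= fIh in Bt.
have WP := WP_nat I0sub I0U I0fin (fun B (F2B : Fin2 B) => F2B) NoF2.
have [AA [AAJ AAAD AAE AAg]] := core_construct I0sub I0fin J0sub J0fin WP KT ch.
have I0z : I0 set0 := I0fin _ (finite_set0 nat).
have J0z : J0 set0 := J0fin _ (finite_set0 nat).
have iAA : infinite_set AA.
  move=> fAA.
  have JU0 : J0 (\bigcup_(a in AA) a) :=
    ideal_bigcup J0U J0z fAA (fun a Aa => (AAJ a Aa).1).
  have nJE : ~ J0 (~` \bigcup_(a in AA) a).
    by move=> JE; apply: J0T; rewrite -(setvU (\bigcup_(a in AA) a)); apply: J0U.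
  have [a [Aa ia]] := AAE _ nJE.
  apply: ia; apply: sub_finite_set (finite_set0 nat) => n [nU an]; apply: nU.
  by exists a.
exists AA; split; first by split => // a Aa; case: (AAJ a Aa).
split.
  split; first exact: mrowka_hausdorff AAAD.
  move=> x.
  suff [A [AX nIA [p cp]]] : exists A, [/\ A `<=` supp I', ~ I' A & exists p, conv_on x A p].
    exists A; split; [by rewrite sIe|by move=> IA; apply: nIA; apply: II'|by exists p].
  pose X := supp I'.
  have [[p np]|allfib] := pselect (exists p, ~ I' (X `&` x @^-1` [set p])).
    exists (X `&` x @^-1` [set p]); split; [exact: subIsetl|exact: np|].
    by exists p; apply: conv_const => t [_ ->].
  have fibI : forall p, I' (X `&` x @^-1` [set p]).
    by move=> p; apply: contrapT => np; apply: allfib; exists p.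
  pose XA := X `&` [set t | exists a, x t = pt_set a].
  have [nIXA|IXA] := pselect (~ I' XA).
    pose C0 := hI @^-1` XA.
    have nIC0 : ~ I0 C0 by rewrite /I0 /K0 /= (h_pre hfI (@subIsetl _ _ _)).
    have cim : countable (x @` X) := card_le_trans (card_image_le x X) cX.
    have [io ioinj] := countable_injP _ cim.
    pose pi n := io (x (hI n)).
    have fibpi : forall k, I0 (C0 `&` pi @^-1` [set k]).
      move=> k; have [[n0 [Cn0 pn0]]|none] := pselect (exists n0, (C0 `&` pi @^-1` [set k]) n0).
        apply: I'sub (fibI (x (hI n0))) _ => _ [n [Cn pn] <-]; split; first exact: hIX.
        apply: ioinj; rewrite ?inE; [by exists (hI n) => //; exact: hIX|by exists (hI n0) => //; exact: hIX|].
        by move: pn pn0; rewrite /pi /= => -> ->.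
      by apply: I0sub I0z _ => n Cn; apply: none; exists n.
    have [D0 [D0C0 nID0 finD0]] := WP _ _ nIC0 fibpi.
    exists (hI @` D0); split => //; first by move=> _ [n _ <-]; exact: hIX.
    exists None; apply: conv_None.
      by move=> _ [n Dn <-]; have [_ [a xa]] := D0C0 _ Dn; exists a.
    move=> a; apply: sub_finite_set (finite_image hI (finD0 (io (pt_set a)))).
    by move=> _ [[n Dn <-] xa]; exists n => //; split => //; rewrite /= /pi xa.
  have {}IXA : I' XA by apply: contrapT.
  pose g n := match x (hI n) with Some (inr m) => m | _ => 0%N end.
  pose XN := X `&` x @^-1` [set None].
  have cover : forall n, (X `&` x @^-1` [set pt_nat (g n)] `|` XA `|` XN) (hI n).
    move=> n; have Xn := hIX n; rewrite /g.
    case e: (x (hI n)) => [[a|m]|].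
    - by left; right; rewrite /XA; split => //; exists a.
    - by left; left; split => //; rewrite /= e.
    - by right; rewrite /XN; split.
  have fibg : forall k, I0 (g @^-1` [set k]).
    move=> k; apply: (I'sub _ _ (I'U _ _ (I'U _ _ (fibI (pt_nat k)) IXA) (fibI None))).
    by move=> _ [n gn <-]; have := cover n; rewrite /= gn.
  have [a [Aa [D0 [nID0 gD0 finD0]]]] := AAg g fibg.
  pose Xw := X `&` [set t | exists m, x t = pt_nat m].
  exists (hI @` D0 `&` Xw); split.
  - by move=> t [_ [Xt _]].
  - move=> IA; apply: nID0; apply: (I'sub _ _ (I'U _ _ (I'U _ _ IA IXA) (fibI None))).
    move=> _ [n Dn <-]; have := cover n.
    case=> [[[Xn xn]|XAn]|XNn]; [left; left; split; [by exists n|split => //; by exists (g n)]|by left; right|by right].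
  pose a' : AA := SigSub (mem_set Aa).
  exists (pt_set a'); apply: conv_set AAAD _ _.
    move=> _ [[n Dn <-] [_ [m xm]]]; exists m; split => //.
    have -> : m = g n by rewrite /g xm.
    by apply: gD0; exists n.
  move=> m; apply: sub_finite_set (finite_image hI (finD0 m)).
  move=> _ [[[n Dn <-] _] xm]; exists n => //; split => //.
  by rewrite /= /g xm.
move=> [_ HJ].
pose x (u : U) : mrowka AA := pt_nat (fJ u).
have [A [AY nJA [p cp]]] := HJ x.
have finJ : forall F, F `<=` A -> finite_set F -> J F.
  by move=> F FA fF; apply: Jfin fF => u /FA /AY.
case: p cp => [[a'|m]|] cp.
- have Ub := nbhs_basic (b2_basic a' (finite_set0 nat)) (or_introl erefl).
  have fin := cp _ Ub.
  have Ja : J (hJ @` val a') by case: (AAJ _ (set_mem (valP a'))).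
  apply: nJA; apply: (Jsub _ _ (JU _ _ (finJ _ (fun u => @proj1 _ _) fin) Ja)).
  move=> u Au; have [Ubu|nUbu] := pselect (b2 a' set0 (x u)); last by left.
  right; case: Ubu => [//|[n [an _] e]].
  exists n => //; case: e => ->; exact: hfJ (AY _ Au).
- have Ub := nbhs_basic (b1_basic AA m) (erefl (pt_nat m)).
  have fin := cp _ Ub.
  apply: nJA; apply: (Jsub _ _ (JU _ _ (finJ _ (fun u => @proj1 _ _) fin)
    (Jfin _ _ (finite_set1 (hJ m))))).
    by move=> _ ->; exact: hJY.
  move=> u Au; have [Ubu|nUbu] := pselect (x u = pt_nat m); last by left.
  by right; case: Ubu => <-; rewrite hfJ //; exact: AY.
- pose E := hJ @^-1` A.
  have nJE : ~ J0 E by rewrite /J0 /K0 /= (h_pre hfJ AY).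
  have [a [Aa ia]] := AAE _ nJE.
  pose a' : AA := SigSub (mem_set Aa).
  have Ub := nbhs_basic (b3_basic (finite_set0 nat) (finite_set1 a')) (or_introl (or_introl erefl)).
  have fin := cp _ Ub.
  apply: ia; apply: sub_finite_set (finite_image fJ fin).
  move=> n [En an]; exists (hJ n); last exact: fJh.
  split => //; rewrite /x fJh => -[[//|[b _ //]]|[k nk e]].
  case: e => kn; subst k; apply: nk; right; exists a' => //.
Qed.
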